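(* Let $A$ be a vector bundle over $M$, $X$ a vector field of degree $b-1$ on the graded manifold $A[1]$, and $B_X$ as defined below. Then for all $E_1,\dots,E_b\in\Gamma(A)$, $f\in C^\infty(M)$ and $1\le j\le b$: $B_X(E_1,\dots,fE_j,\dots,E_b)=f\,B_X(E_1,\dots,E_b)+(-1)^j\langle a_X(f),E_1\wedge\cdots\wedge\widehat{E_j}\wedge\cdots\wedge E_b\rangle E_j$.
   Context: $A[1]$ is the graded manifold with function algebra $C^\infty(A[1])=\Gamma(\wedge^\bullet A^\vee)$; a vector field of degree $d$ on $A[1]$ is a graded derivation of degree $d$ of $\Gamma(\wedge^\bullet A^\vee)$. For such $X$ of degree $b-1$, $a_X:C^\infty(M)\to\Gamma(\wedge^{b-1}A^\vee)$ and $\partial_X:\Gamma(A^\vee)\to\Gamma(\wedge^bA^\vee)$ denote the restrictions of $X$ (so $a_X$ is a derivation and $\partial_X(fE)=a_X(f)E+f\partial_X(E)$). The pairing $\langle\eta,X_1\wedge\cdots\wedge X_p\rangle=\eta(X_1,\dots,X_p)$ for $\eta\in\Gamma(\wedge^pA^\vee)$ (and $0$ if degrees differ). $B_X:\Gamma(A)^{\times b}\to\Gamma(A)$ is defined by $\langle W,B_X(E_1,\dots,E_b)\rangle=(-1)^{b-1}\big(\langle\partial_X W,E_1\wedge\cdots\wedge E_b\rangle-\sum_{i=1}^b(-1)^{b-i}\langle a_X\langle W,E_i\rangle,E_1\wedge\cdots\wedge\widehat{E_i}\wedge\cdots\wedge E_b\rangle\big)$ for all $W\in\Gamma(A^\vee)$.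 *)

(* Defs.v *)
From mathcomp Require Import all_boot all_algebra.
Set Implicit Arguments. Unset Strict Implicit. Unset Printing Implicit Defensive.
Import GRing.Theory.
Local Open Scope ring_scope.

(* A b-tuple of sections E_1,...,E_b is a function 'I_b -> V (0-based). *)

Definition upd (V : Type) (p : nat) (E : 'I_p -> V) (i : 'I_p) (v : V) : 'I_p -> V :=
  fun k => if k == i then v else E k.

(* E_1, ..., hat(E_j), ..., E_p : drop the j-th entry *)
Definition omit (V : Type) (p : nat) (E : 'I_p -> V) (j : 'I_p) : 'I_p.-1 -> V :=
  fun k => E (lift j k).

(* Gamma(A^vee): R-linear maps V -> R *)
Definition lin1 (R : comRingType) (V : lmodType R) (W : V -> R) : Prop :=
  forall (f : R) (v w : V), W (f *: v + w) = f * W v + W w.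

(* Gamma(wedge^p A^vee): R-multilinear alternating maps; eta E is the pairing
   <eta, E_1 /\ ... /\ E_p>. *)
Definition multilinear (R : comRingType) (V : lmodType R) (p : nat)
    (eta : ('I_p -> V) -> R) : Prop :=
  forall (E : 'I_p -> V) (i : 'I_p) (f : R) (v w : V),
    eta (upd E i (f *: v + w)) = f * eta (upd E i v) + eta (upd E i w).

Definition alternating (R : comRingType) (V : lmodType R) (p : nat)
    (eta : ('I_p -> V) -> R) : Prop :=
  forall (E : 'I_p -> V) (i k : 'I_p), i != k -> E i = E k -> eta E = 0.

Definition is_form (R : comRingType) (V : lmodType R) (p : nat)
    (eta : ('I_p -> V) -> R) : Prop :=
  multilinear eta /\ alternating eta.

(* a_X : C^oo(M) -> Gamma(wedge^(b-1) A^vee) is a derivation *)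
Definition is_derivation (R : comRingType) (V : lmodType R) (p : nat)
    (a : R -> ('I_p -> V) -> R) : Prop :=
  (forall f g E, a (f + g) E = a f E + a g E) /\
  (forall f g E, a (f * g) E = f * a g E + g * a f E).

(* The defining identity of B_X (b-ary bracket), tested against all W. *)
Definition is_BX (R : comRingType) (V : lmodType R) (b : nat)
    (aX : R -> ('I_b.-1 -> V) -> R) (dX : (V -> R) -> ('I_b -> V) -> R)
    (B : ('I_b -> V) -> V) : Prop :=
  forall (E : 'I_b -> V) (W : V -> R), lin1 W ->
    W (B E) = (-1) ^+ b.-1 *
      (dX W E - \sum_(i < b) (-1) ^+ (b - i.+1) * aX (W (E i)) (omit E i)).

(* Main.v *)
Require Import Defs.
From mathcomp Require Import all_boot all_algebra.
From Stdlib Require Import FunctionalExtensionality.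
From mathcomp Require Import ring zify.
Import GRing.Theory.
Local Open Scope ring_scope.
Set Implicit Arguments.

Lemma upd_id (V : Type) (p : nat) (F : 'I_p -> V) k : upd F k (F k) = F.
Proof. apply: functional_extensionality => x; rewrite /upd; by case: eqP => [->|]. Qed.

Lemma form_scale (R : comRingType) (V : lmodType R) (p : nat)
    (eta : ('I_p -> V) -> R) : multilinear eta ->
  forall F k f, eta (upd F k (f *: F k)) = f * eta F.
Proof.
move=> ml F k f.
have z : eta (upd F k 0) = 0.
  have := ml F k 1 0 0; rewrite scaler0 addr0 mul1r => h.
  by apply: (addrI (eta (upd F k 0))); rewrite addr0 -h.
by have := ml F k f (F k) 0; rewrite addr0 z addr0 upd_id.
Qed.

Lemma lin1_scale (R : comRingType) (V : lmodType R) (W : V -> R) :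
  lin1 W -> forall f v, W (f *: v) = f * W v.
Proof.
move=> l f v.
have z : W 0 = 0.
  have := l 1 0 0; rewrite scaler0 addr0 mul1r => h.
  by apply: (addrI (W 0)); rewrite addr0 -h.
by have := l f v 0; rewrite addr0 z addr0.
Qed.

Lemma lin1_sub (R : comRingType) (V : lmodType R) (W : V -> R) :
  lin1 W -> forall v w, W (v - w) = W v - W w.
Proof.
move=> l v w.
by have := l (-1) w v; rewrite scaleN1r mulN1r addrC => ->; rewrite addrC.
Qed.

Unset Implicit Arguments.

Theorem proposition14p2 (R : comRingType) (V : lmodType R) (b : nat)
    (aX : R -> ('I_b.-1 -> V) -> R) (dX : (V -> R) -> ('I_b -> V) -> R)
    (B : ('I_b -> V) -> V)
    (sep : forall v : V, (forall W : V -> R, lin1 W -> W v = 0) -> v = 0)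
    (haX_form : forall f, is_form (aX f))
    (haX : is_derivation aX)
    (hdX_form : forall W, lin1 W -> is_form (dX W))
    (hdX_leib : forall (f : R) (W : V -> R), lin1 W ->
       forall E, dX (fun v => f * W v) E =
         (* a_X(f) /\ W + f dX W, with (alpha/\W)(E) =
            sum_i (-1)^(b-1-i) alpha(E without i) W(E_i) *)
         \sum_(i < b) (-1) ^+ (b - i.+1) * aX f (omit E i) * W (E i)
         + f * dX W E)
    (hB : is_BX aX dX B) :
  forall (E : 'I_b -> V) (f : R) (j : 'I_b),
    B (upd E j (f *: E j)) =
      f *: B E + ((-1) ^+ j.+1 * aX f (omit E j)) *: E j.
Proof.
move=> E f j.
apply/eqP; rewrite -subr_eq0; apply/eqP; apply: sep => W lW.
have lW' : forall (g : R) v w, W (g *: v + w) = g * W v + W w := lW.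
rewrite lin1_sub // lW' (lin1_scale lW) !hB //.
have hdx : dX W (upd E j (f *: E j)) = f * dX W E.
  by apply: form_scale; case: (hdX_form W lW).
have hom : omit (upd E j (f *: E j)) j = omit E j.
  apply: functional_extensionality => k.
  by rewrite /omit /upd eq_sym (negbTE (neq_lift j k)).
have hterm : forall i : 'I_b,
   (-1) ^+ (b - i.+1) * aX (W (upd E j (f *: E j) i)) (omit (upd E j (f *: E j)) i)
   = f * ((-1) ^+ (b - i.+1) * aX (W (E i)) (omit E i)) +
     (if i == j then (-1) ^+ (b - j.+1) * (W (E j) * aX f (omit E j)) else 0).
  move=> i; case: eqP => [->|/eqP nij].
    rewrite hom {1}/upd eqxx (lin1_scale lW) (proj2 haX).
    by rewrite mulrDr mulrCA.
  rewrite addr0 {1}/upd (negbTE nij).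
  case: (unliftP i j) nij => [j' ->|->] nij; last by rewrite eqxx in nij.
  have -> : omit (upd E (lift i j') (f *: E (lift i j'))) i
          = upd (omit E i) j' (f *: omit E i j').
    apply: functional_extensionality => k.
    rewrite /omit /upd (inj_eq (@lift_inj _ i)) //.
  rewrite form_scale; last by case: (haX_form (W (E i))).
  by rewrite mulrCA.
rewrite hdx (eq_bigr _ (fun i _ => hterm i)) big_split /= -big_distrr /=.
rewrite -big_mkcond /= big_pred1_eq.
set S := \sum_(i < b) _.
set c := (-1) ^+ (b - j.+1).
have hs : (-1) ^+ b.-1 * c = (-1) ^+ j :> R.
  rewrite /c -exprD.
  have hb : (b.-1 + (b - j.+1) = j + 2 * (b - j.+1))%N.
    have := ltn_ord j; lia.
  by rewrite hb exprD exprM expr2 mulrNN mulr1 expr1n mulr1.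
rewrite exprS -hs; clear hs.
move: ((-1) ^+ b.-1) c (dX W E) S (W (E j)) (aX f (omit E j)) => s c' d S' w a.
ring.
Qed.
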